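(* Let $\omega\in[n]^*$, $i\in[n]$, and $x\in B^M_\omega:=M_\omega B_\omega$. Then (1) $x-M_\omega e_i\in B^M_\omega$ or $x-M_\omega e_i\le0$ (or both); and (2) $x+M_\omega e_i\in B^M_\omega$ or $x+M_\omega e_i\ge u_\omega$ (or both). Inequalities are coordinatewise.
   Context: Let $[n]=\{1,\dots,n\}$, $e_1,\dots,e_n$ the standard basis of $\mathbb{Z}^n$; $\varepsilon$ is the empty word, $*$ concatenation. For words $\omega$ over $[n]$ define recursively $\delta^i_\omega\in\mathbb{Z}^n$: $\delta^i_\varepsilon=e_i$; $\delta^j_{\omega*j}=\delta^j_\omega$, $\delta^i_{\omega*j}=\delta^i_\omega-\delta^j_\omega$ for $i\ne j$. Let $B_\varepsilon=\{0\}$, $B_{\omega*j}=B_\omega+\{0,\delta^j_\omega\}$ (Minkowski sum). Let $M_\omega=(\delta^1_\omega\ \cdots\ \delta^n_\omega)^{-1}$ (inverse of the matrix with columns $\delta^i_\omega$). For $k\in[n]$ let $D^k=\mathrm{id}+e_k(\mathbb{1}-e_k)^T$ with $\mathbb{1}=(1,\dots,1)^T$. Define $u_\varepsilon=0$, $u_{\omega*j}=e_j+D^j u_\omega$. *)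

(* Defs.v *)
(* Vectors of Z^n are represented as column vectors 'cV[rat]_n
   (integer-valued), so that the inverse M_omega can be taken with invmx. *)
From HB Require Import structures.
From mathcomp Require Import all_boot all_order all_algebra.
Set Implicit Arguments. Unset Strict Implicit. Unset Printing Implicit Defensive.
Import Order.TTheory GRing.Theory Num.Theory.
Local Open Scope ring_scope.

Section Defs.
Variable n : nat.

Definition evec (i : 'I_n) : 'cV[rat]_n := delta_mx i 0.

(* Words over [n] are sequences of 'I_n; w ++ [:: j] = omega * j.
   The recursions are on the last letter, implemented on the reversed word. *)
Fixpoint delta_rev (r : seq 'I_n) (i : 'I_n) : 'cV[rat]_n :=
  match r with
  | [::] => evec i
  | j :: r' => if i == j then delta_rev r' j else delta_rev r' i - delta_rev r' j
  end.
Definition delta (w : seq 'I_n) (i : 'I_n) : 'cV[rat]_n := delta_rev (rev w) i.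

(* B_omega as a finite list of points (Minkowski sum B + {0, d}) *)
Fixpoint B_rev (r : seq 'I_n) : seq 'cV[rat]_n :=
  match r with
  | [::] => [:: 0]
  | j :: r' => B_rev r' ++ [seq b + delta_rev r' j | b <- B_rev r']
  end.
Definition B (w : seq 'I_n) : seq 'cV[rat]_n := B_rev (rev w).

Definition deltamx (w : seq 'I_n) : 'M[rat]_n := \matrix_(a, i) delta w i a 0.
Definition M (w : seq 'I_n) : 'M[rat]_n := invmx (deltamx w).

Definition D (k : 'I_n) : 'M[rat]_n :=
  1%:M + evec k *m (const_mx 1 - evec k)^T.

Fixpoint u_rev (r : seq 'I_n) : 'cV[rat]_n :=
  match r with
  | [::] => 0
  | j :: r' => evec j + D j *m u_rev r'
  end.
Definition u (w : seq 'I_n) : 'cV[rat]_n := u_rev (rev w).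

Definition inBM (w : seq 'I_n) (x : 'cV[rat]_n) : Prop :=
  exists2 b, b \in B w & x = M w *m b.

Definition vle (x y : 'cV[rat]_n) : Prop := forall a : 'I_n, x a 0 <= y a 0.

End Defs.

(* Main.v *)
Require Import Defs.
From mathcomp Require Import all_boot all_order all_algebra.
From mathcomp Require Import ring lra zify.
Import Order.TTheory GRing.Theory Num.Theory.
Local Open Scope ring_scope.
Set Implicit Arguments. Unset Strict Implicit.

Section Aux.
Variable n : nat.
Implicit Types (r : seq 'I_n) (x y z v : 'cV[rat]_n) (i j : 'I_n).

Lemma evecE i a : (evec i) a 0 = (a == i)%:R.
Proof. by rewrite /evec mxE eqxx andbT. Qed.

Definition sumc (y : 'cV[rat]_n) := \sum_k y k 0.

Lemma DE j y a : (D j *m y) a 0 = y a 0 + (a == j)%:R * (sumc y - y j 0).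
Proof.
rewrite /D mulmxDl mul1mx mxE; congr (_ + _).
rewrite -mulmxA mxE big_ord1 /evec mxE andbT; congr (_ * _).
rewrite mxE /sumc (bigD1 j) //= [in RHS](bigD1 j) //=.
rewrite !mxE !eqxx subrr mul0r add0r addrAC subrr add0r.
by apply: eq_bigr => k /negbTE kj; rewrite !mxE kj subr0 mul1r.
Qed.

Lemma sumc_evec i : sumc (evec i) = 1.
Proof.
rewrite /sumc (bigD1 i) //= big1 ?addr0 ?evecE ?eqxx //.
by move=> k /negbTE ki; rewrite evecE ki.
Qed.

Lemma sumcD y z : sumc (y + z) = sumc y + sumc z.
Proof. by rewrite /sumc -big_split; apply: eq_bigr => k _; rewrite mxE. Qed.
Lemma sumcN y : sumc (- y) = - sumc y.
Proof. by rewrite /sumc -sumrN; apply: eq_bigr => k _; rewrite mxE. Qed.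

Lemma D_evec j : D j *m evec j = evec j.
Proof.
apply/colP => a; rewrite DE sumc_evec !evecE eqxx subrr mulr0 addr0 //.
Qed.

Fixpoint Mr r : 'M[rat]_n := if r is j :: r' then D j *m Mr r' else 1%:M.

Lemma Mr_delta r i : Mr r *m delta_rev r i = evec i.
Proof.
elim: r i => [|j r IH] i /=; first by rewrite mul1mx.
case: eqP => [->|/eqP ij]; first by rewrite -mulmxA IH D_evec.
rewrite -mulmxA mulmxBr !IH; apply/colP => a.
rewrite DE sumcD sumcN !sumc_evec !mxE !eqxx !andbT [j == i]eq_sym (negbTE ij).
rewrite /=; ring.
Qed.

Lemma Mr_M w : M w = Mr (rev w).
Proof.
have H : Mr (rev w) *m deltamx w = 1%:M.
  apply/matrixP => a b.
  have -> : (Mr (rev w) *m deltamx w) a b = (Mr (rev w) *m delta w b) a 0.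
    by rewrite !mxE; apply: eq_bigr => k _; rewrite mxE.
  by rewrite /delta Mr_delta !mxE eqxx andbT.
have [_ U] := mulmx1_unit H.
by rewrite /M -[RHS]mulmx1 -(mulmxV U) mulmxA H mul1mx.
Qed.


Lemma DE' j y a : (D j *m y) a 0 = if a == j then sumc y else y a 0.
Proof.
rewrite DE; case: (a =P j) => [->|_]; first by rewrite mul1r addrC subrK.
by rewrite mul0r addr0.
Qed.

Definition S r x := exists2 b, b \in B_rev r & x = Mr r *m b.

Lemma S0 r : S r 0.
Proof.
exists 0; last by rewrite mulmx0.
elim: r => [|j r IH] //=; first by rewrite inE.
by rewrite mem_cat IH.
Qed.

Lemma S_nil x : S [::] x -> x = 0.
Proof. by case=> b; rewrite inE => /eqP -> ->; rewrite mulmx0. Qed.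

Lemma S_cons_inv j r x : S (j :: r) x ->
  exists2 y, S r y & (x = D j *m y \/ x = D j *m (y + evec j)).
Proof.
case=> b /=; rewrite mem_cat => /orP [Hb|/mapP [b0 Hb0 ->]] ->.
  by exists (Mr r *m b); [exists b|left; rewrite mulmxA].
exists (Mr r *m b0); [by exists b0|right].
by rewrite -mulmxA mulmxDr Mr_delta.
Qed.

Lemma S_cons1 j r y : S r y -> S (j :: r) (D j *m y).
Proof.
case=> b Hb ->; exists b; last by rewrite /= mulmxA.
by rewrite /= mem_cat Hb.
Qed.

Lemma S_cons2 j r y : S r y -> S (j :: r) (D j *m (y + evec j)).
Proof.
case=> b Hb ->; exists (b + delta_rev r j).
  by rewrite /= mem_cat; apply/orP; right; apply/mapP; exists b.
by rewrite /= -[in RHS]mulmxA [in RHS]mulmxDr Mr_delta.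
Qed.

Definition intv x := forall a, x a 0 \is a Num.int.

Lemma intv_D j y : intv y -> intv (D j *m y).
Proof.
move=> Hy a; rewrite DE'; case: ifP => // _.
by apply: rpred_sum => k _; apply: Hy.
Qed.

Lemma intv_evec i : intv (evec i).
Proof. by move=> a; rewrite evecE natr_int. Qed.

Lemma intv_S r x : S r x -> intv x.
Proof.
elim: r x => [|j r IH] x; first by move/S_nil => -> a; rewrite mxE rpred0.
case/S_cons_inv => y /IH Hy [->|->]; apply: intv_D => //.
by move=> a; rewrite mxE; apply: rpredD; [exact: Hy|rewrite ?evecE ?mxE natr_int].
Qed.

Lemma intv_v r i : intv (Mr r *m evec i).
Proof.
elim: r => [|j r IH] /=; first by rewrite mul1mx; apply: intv_evec.
by rewrite -mulmxA; apply: intv_D.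
Qed.

Lemma intv_B x y : intv x -> intv y -> intv (x - y).
Proof. by move=> Hx Hy a; rewrite !mxE rpredB. Qed.

Lemma vle_D0 j z : vle z 0 -> vle (D j *m z) 0.
Proof.
move=> Hz a; rewrite DE' mxE; case: ifP => _; last by have := Hz a; rewrite mxE.
by apply: sumr_le0 => k _; have := Hz k; rewrite mxE.
Qed.

Lemma key j z : vle z 0 -> intv z -> z != 0 -> vle (D j *m (z + evec j)) 0.
Proof.
move=> Hz Iz nz a; have -> : (0 : 'cV[rat]_n) a 0 = 0 by rewrite mxE.
rewrite DE'; case: ifP => [_|/negbT aj].
  rewrite sumcD sumc_evec.
  have [k nzk] : exists k, z k 0 != 0.
    apply/existsP; apply: contraR nz; rewrite negb_exists => /forallP H.
    by apply/eqP/colP => k; rewrite mxE; apply/eqP; have := H k; rewrite negbK.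
  have zk0 : z k 0 <= 0 by have := Hz k; rewrite mxE.
  have zk1 : z k 0 <= -1.
    have /intrP [m Hm] := Iz k.
    have : z k 0 < 0 by rewrite lt_neqAle nzk zk0.
    rewrite Hm ltrz0 => mneg.
    have : m <= -1 by lia.
    by rewrite -(ler_int rat) => H; apply: le_trans H _; rewrite intrN.
  have : sumc z <= z k 0.
    rewrite /sumc (bigD1 k) //= gerDl; apply: sumr_le0 => l _.
    by have := Hz l; rewrite mxE.
  lra.
rewrite mxE evecE (negbTE aj) addr0; by have := Hz a; rewrite mxE.
Qed.

Lemma part1 r x i : S r x ->
  S r (x - Mr r *m evec i) \/ vle (x - Mr r *m evec i) 0.
Proof.
elim: r x => [|j r IH] x.
  move/S_nil => ->; right => a; rewrite mul1mx !mxE.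
  by rewrite sub0r oppr_le0 ler0n.
case/S_cons_inv => y Sy Hx /=; rewrite -mulmxA.
set v := Mr r *m evec i.
case: Hx => ->.
  rewrite -mulmxBr; case: (IH y Sy) => H; first by left; apply: S_cons1.
  by right; apply: vle_D0.
rewrite -mulmxBr addrAC.
case: (eqVneq (y - v) 0) => [->|nz].
  by left; apply: S_cons2; apply: S0.
case: (IH y Sy) => H; first by left; apply: S_cons2.
right; apply: key => //; apply: intv_B; [exact: intv_S Sy|exact: intv_v].
Qed.

Lemma compl r x : S r x -> S r (u_rev r - x).
Proof.
elim: r x => [|j r IH] x; first by move/S_nil => ->; rewrite subr0 /=; apply: S0.
case/S_cons_inv => y /IH Sy [->|->] /=.
  have -> : evec j + D j *m u_rev r - D j *m y = D j *m (u_rev r - y + evec j).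
    rewrite mulmxDr mulmxBr D_evec.
    move: (D j *m u_rev r) (D j *m y) (evec j) => p q e.
    by apply/colP => a; rewrite !mxE; ring.
  exact: S_cons2.
have -> : evec j + D j *m u_rev r - D j *m (y + evec j) = D j *m (u_rev r - y).
  rewrite mulmxDr mulmxBr D_evec.
  move: (D j *m u_rev r) (D j *m y) (evec j) => p q e.
  by apply/colP => a; rewrite !mxE; ring.
exact: S_cons1.
Qed.

End Aux.

Theorem lemma3p4 (n : nat) (w : seq 'I_n) (i : 'I_n) (x : 'cV[rat]_n) :
  inBM w x ->
  (inBM w (x - M w *m evec i) \/ vle (x - M w *m evec i) 0) /\
  (inBM w (x + M w *m evec i) \/ vle (u w) (x + M w *m evec i)).
Proof.
have H : forall r : seq 'I_n, S r x ->
  (S r (x - Mr r *m evec i) \/ vle (x - Mr r *m evec i) 0) /\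
  (S r (x + Mr r *m evec i) \/ vle (u_rev r) (x + Mr r *m evec i)).
  move=> r Sx; split; first exact: part1.
  have := part1 i (compl Sx).
  case=> [/compl|Hle].
    by rewrite -addrA -opprD opprB addrC subrK; left.
  right => a; have := Hle a; rewrite !mxE; lra.
by rewrite /inBM /u Mr_M; apply: H.
Qed.
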